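(* Let $X$ be a $k$-dimensional complex with vertex set $[n]$ and complete $(k-1)$-skeleton, and let $b\in B^{k-1}(X)$. For $F\in X_{k-2}$ define $h_b(F):=\sum_{v\notin F}[F\cup\{v\}:F]\,b(F\cup\{v\})$. Fix $d>0$ and let $E=D_{k-1}(X)-dI$. Then: (a) $b(H)=\frac1n\sum_{F\in X_{k-2},\,F\subset H}[H:F]\,h_b(F)$ for every $H\in X_{k-1}$; (b) $\langle Eb,Eb\rangle\le\frac{k}{n^2}\sum_{F\in X_{k-2}}h_b(F)^2\langle E\delta_{k-2}e_F,E\delta_{k-2}e_F\rangle$; (c) $\sum_{F\in X_{k-2}}h_b(F)^2\le k(n-k+1)\langle b,b\rangle$.
   Context: Standard Euclidean inner product. Complexes have linearly ordered vertex sets; $X_i$ is the set of $i$-faces; $[F:G]$ is the oriented incidence number ($(-1)^j$ if $F\setminus G=\{v_j\}$, $F=\{v_0<\dots<v_i\}$; $0$ if $G\not\subseteq F$). Complete $(k-1)$-skeleton: every vertex set of size at most $k$ is a face. $(\delta_{k-2}f)(H)=\sum_{G}[H:G]f(G)$, $B^{k-1}(X)=\operatorname{im}\delta_{k-2}$, $e_F$ the indicator cochain of $F$. $D_{k-1}(X)$ is the diagonal matrix with entry $\deg(F)$ (number of $k$-faces containing $F$) at $F\in X_{k-1}$. *)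

(* Defs.v *)
From HB Require Import structures.
From mathcomp Require Import all_boot all_order all_algebra.
Set Implicit Arguments. Unset Strict Implicit. Unset Printing Implicit Defensive.
Import Order.TTheory GRing.Theory Num.Theory.
Local Open Scope ring_scope.

(* Faces are subsets of the vertex set [n] = 'I_n (ordered by the natural order).
   An i-face is a face with i+1 vertices. *)

Definition is_complex n (X : {set {set 'I_n}}) : Prop :=
  forall F G : {set 'I_n}, F \in X -> G \subset F -> G \in X.

Definition faces_sz n (X : {set {set 'I_n}}) (m : nat) : {set {set 'I_n}} :=
  [set F in X | #|F| == m].

Definition inc (R : ringType) n (F G : {set 'I_n}) : R :=
  match [pick v in F :\: G] with
  | Some v => if (G \subset F) && (#|F :\: G| == 1%N)
              then (-1) ^+ #|[set u in F | (val u < val v)%N]|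
              else 0
  | None => 0
  end.

Definition delta (R : ringType) n (X : {set {set 'I_n}}) (m : nat)
  (f : {set 'I_n} -> R) : {set 'I_n} -> R :=
  fun H => \sum_(G in faces_sz X m) inc R H G * f G.

Definition ip (R : ringType) n (X : {set {set 'I_n}}) (m : nat)
  (f g : {set 'I_n} -> R) : R :=
  \sum_(H in faces_sz X m) f H * g H.

Definition deg n (X : {set {set 'I_n}}) (F : {set 'I_n}) : nat :=
  #|[set G in X | (F \subset G) && (#|G| == #|F|.+1)]|.

Definition Eop (R : ringType) n (X : {set {set 'I_n}}) (d : R)
  (f : {set 'I_n} -> R) : {set 'I_n} -> R :=
  fun H => ((deg X H)%:R - d) * f H.

Definition ind (R : ringType) n (F : {set 'I_n}) : {set 'I_n} -> R :=
  fun G => if G == F then 1 else 0.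

(* b ∈ B^{k-1}(X) = im δ_{k-2} : b agrees on (k-1)-faces (k vertices) with δ g
   for some cochain g on (k-2)-faces (k-1 vertices) *)
Definition in_B (R : ringType) n (X : {set {set 'I_n}}) (k : nat)
  (b : {set 'I_n} -> R) : Prop :=
  exists g : {set 'I_n} -> R,
    forall H, H \in faces_sz X k -> b H = delta X (k - 1) g H.

Definition hb (R : ringType) n (b : {set 'I_n} -> R) (F : {set 'I_n}) : R :=
  \sum_(v | v \notin F) inc R (F :|: [set v]) F * b (F :|: [set v]).

(* Main.v *)
Require Import Defs.
From HB Require Import structures.
From mathcomp Require Import all_boot all_order all_algebra.
From mathcomp Require Import ring.
Import Order.TTheory GRing.Theory Num.Theory.
Local Open Scope ring_scope.

Lemma cs (R : realFieldType) (I : finType) (P : pred I) (x : I -> R) :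
  (\sum_(i | P i) x i) ^+ 2 <= (\sum_(i | P i) 1) * \sum_(i | P i) x i ^+ 2.
Proof.
set S1 := \sum_(i | P i) (1 : R); set S := \sum_(i | P i) x i;
set Q := \sum_(i | P i) x i ^+ 2.
have inner : forall i, \sum_(j | P j) (x i - x j) ^+ 2 = x i ^+ 2 * S1 + Q - 2 * x i * S.
  move=> i.
  rewrite (eq_bigr (fun j => (x i ^+ 2 * 1 + x j ^+ 2) + - (2 * x i * x j))); last by move=> j _; ring.
  by rewrite big_split /= big_split /= sumrN -!big_distrr.
have tot : \sum_(i | P i) \sum_(j | P j) (x i - x j) ^+ 2 = 2 * (S1 * Q - S ^+ 2).
  rewrite (eq_bigr _ (fun i _ => inner i)).
  rewrite big_split /= big_split /= sumrN -big_distrl /= -/Q.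
  rewrite [X in - X](eq_bigr (fun i => 2 * S * x i)); last by move=> i _; ring.
  rewrite -big_distrr /= -/S.
  have -> : \sum_(i | P i) Q = Q * S1.
    by rewrite /S1 big_distrr /=; apply: eq_bigr => i _; rewrite mulr1.
  ring.
have : 0 <= \sum_(i | P i) \sum_(j | P j) (x i - x j) ^+ 2.
  by apply: sumr_ge0 => i _; apply: sumr_ge0 => j _; apply: sqr_ge0.
by rewrite tot pmulr_rge0 ?ltr0n // subr_ge0.
Qed.

Section Aux.
Variable R : realFieldType.
Variable n : nat.
Implicit Types (F G H K : {set 'I_n}) (u v w a : 'I_n).

Definition sgn F v : R := (-1) ^+ #|[set u in F | (val u < val v)%N]|.

Lemma sgn_sq F v : sgn F v ^+ 2 = 1.
Proof. exact: sqrr_sign. Qed.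

Lemma inc_add F v : v \notin F -> inc R (F :|: [set v]) F = sgn F v.
Proof.
move=> vF; rewrite /inc.
have -> : (F :|: [set v]) :\: F = [set v].
  apply/setP=> x; rewrite !inE; case: eqP => [->|_]; first by rewrite vF orbT.
  by rewrite orbF andNb.
case: pickP => [x|]; last by move/(_ v); rewrite inE eqxx.
rewrite inE => /eqP ->; rewrite subsetUl cards1 /= /sgn.
congr (_ ^+ _); apply: eq_card => y; rewrite !inE.
by case: eqP => [->|_]; rewrite ?ltnn ?andbF ?orbF.
Qed.

Lemma inc_notsub H G : ~~ (G \subset H) -> inc R H G = 0.
Proof. by move=> h; rewrite /inc; case: pickP => // v _; rewrite (negbTE h). Qed.

Lemma inc_nz H G : inc R H G != 0 -> exists2 v, v \notin G & H = G :|: [set v].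
Proof.
rewrite /inc; case: pickP => [v hv|]; last by rewrite eqxx.
case: ifP => [/andP[sGH /cards1P [w hw]] _|]; last by rewrite eqxx.
move: hv; rewrite hw inE => /eqP _.
have : w \in H :\: G by rewrite hw set11.
rewrite inE => /andP[wG _]; exists w => //.
rewrite -hw; apply/setP=> x; rewrite !inE; case: (boolP (x \in G)) => xG /=; [exact: (subsetP sGH) | by []].
Qed.

Lemma sgn_U F a v : a \notin F -> a != v ->
  sgn (F :|: [set a]) v = sgn F v * (if (val a < val v)%N then -1 else 1).
Proof.
move=> aF av; rewrite /sgn.
case: ifP => lt.
  have -> : [set u in F :|: [set a] | (val u < val v)%N] =
            a |: [set u in F | (val u < val v)%N].
    apply/setP=> y; rewrite !inE; case: eqP => [->|_]; by rewrite ?lt ?orbT ?orbF.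
  by rewrite cardsU1 inE (negbTE aF) /= exprS mulrC.
have -> : [set u in F :|: [set a] | (val u < val v)%N] =
          [set u in F | (val u < val v)%N].
  apply/setP=> y; rewrite !inE; case: eqP => [->|_]; by rewrite ?lt ?orbT ?orbF ?andbF.
by rewrite mulr1.
Qed.

Lemma sgn_swap F a v : a \notin F -> v \notin F -> a != v ->
  sgn (F :|: [set a]) v * sgn (F :|: [set v]) a = - (sgn F a * sgn F v).
Proof.
move=> aF vF av; rewrite !sgn_U // 1?eq_sym //.
have : val a != val v by [].
case: ltngtP => // h _; rewrite ?(ltnNge) ?(ltnW h) /=; ring.
Qed.

Lemma inc_swap F a v : a \notin F -> v \notin F -> a != v ->
  inc R (F :|: [set a] :|: [set v]) (F :|: [set a]) *
  inc R (F :|: [set a] :|: [set v]) (F :|: [set v]) =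
  - (inc R (F :|: [set a]) F * inc R (F :|: [set v]) F).
Proof.
move=> aF vF av.
have aFv : a \notin F :|: [set v] by rewrite !inE negb_or aF.
have vFa : v \notin F :|: [set a] by rewrite !inE negb_or vF eq_sym.
rewrite inc_add // -setUA (setUC [set a]) setUA !inc_add //.
exact: sgn_swap.
Qed.

Lemma sq_trick (x1 x2 y1 y2 : R) : x1 ^+ 2 = 1 -> y2 ^+ 2 = 1 ->
  x1 * x2 = - (y1 * y2) -> x1 * y1 + x2 * y2 = 0.
Proof.
move=> hx hy h.
have e : x1 ^+ 2 * x2 * y2 = x1 * (x1 * x2) * y2 by ring.
rewrite h hx mul1r in e; rewrite e.
have -> : x1 * - (y1 * y2) * y2 = - (x1 * y1 * y2 ^+ 2) by ring.
rewrite hy; ring.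
Qed.

Lemma dd0 K G : \sum_(w in K) inc R K (K :\ w) * inc R (K :\ w) G = 0.
Proof.
case: (pickP [pred w in K | inc R (K :\ w) G != 0]) => [w0 /andP[w0K nz] | none]; last first.
  rewrite big1 // => w wK; move: (none w) => /=; rewrite wK /= => /negbFE/eqP ->.
  by rewrite mulr0.
have [a aG defKw0] := inc_nz _ _ nz.
have : a \in K :\ w0 by rewrite defKw0 !inE eqxx orbT.
rewrite !inE => /andP[aw0 aK].
have defK : K = G :|: [set a] :|: [set w0] by rewrite -defKw0 setUC setD1K.
have w0G : w0 \notin G.
  apply/negP => h; have : w0 \in K :\ w0 by rewrite defKw0 !inE h.
  by rewrite !inE eqxx.
have defKa : K :\ a = G :|: [set w0].
  rewrite defK; apply/setP=> y; rewrite !inE.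
  case: (y =P a) => [->|_]; first by rewrite (negbTE aG) (negbTE aw0).
  by rewrite orbF.
rewrite (bigD1 w0) //= (bigD1 a) /=; last by rewrite aK aw0.
rewrite big1 ?addr0; last first.
  move=> w /andP[/andP[wK wnw0] wna]; rewrite (@inc_notsub (K :\ w) G) ?mulr0 //.
  have wG : w \in G by move: wK; rewrite defK !inE (negbTE wnw0) (negbTE wna) !orbF.
  apply/negP => /subsetP /(_ w wG); by rewrite !inE eqxx.
rewrite defKw0 defKa defK.
apply: sq_trick.
- by rewrite inc_add ?sgn_sq // !inE negb_or w0G eq_sym.
- by rewrite inc_add ?sgn_sq.
- by rewrite inc_swap // eq_sym.
Qed.

Variable X : {set {set 'I_n}}.
Variable m : nat.
Hypothesis skel : forall F, (#|F| <= m.+1)%N -> F \in X.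

Lemma reidx1 (f : {set 'I_n} -> R) H : #|H| = m.+1 ->
  \sum_(F in faces_sz X m | F \subset H) f F = \sum_(u in H) f (H :\ u).
Proof.
move=> cH.
rewrite -(big_imset _ (h := fun u => H :\ u)); last first.
  move=> u u' uH u'H /= e; apply/eqP; apply: contraT => ne.
  have : u \in H :\ u' by rewrite !inE ne uH.
  by rewrite -e !inE eqxx.
apply: eq_bigl => F; rewrite /faces_sz inE.
apply/idP/imsetP.
  move=> /andP[/andP[FX /eqP cF] sFH].
  have : #|H :\: F| == 1%N by rewrite cardsDS // cH cF subSnn.
  move=> /cards1P [u hu].
  have : u \in H :\: F by rewrite hu set11.
  rewrite inE => /andP[uF uH].
  exists u => //; apply/setP => x; rewrite !inE.
  case: (x =P u) => [->|/eqP xu]; first by rewrite (negbTE uF).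
  case: (boolP (x \in F)) => xF /=; first by rewrite (subsetP sFH).
  case: (boolP (x \in H)) => // xH.
  have : x \in H :\: F by rewrite inE xF xH.
  by rewrite hu inE (negbTE xu).
move=> [u uH ->]; rewrite subsetDl andbT.
have c : #|H :\ u| = m by move: cH; rewrite (cardsD1 u) uH => [[]].
by rewrite c eqxx andbT skel // c.
Qed.

Lemma reidx2 (f : {set 'I_n} -> R) F : #|F| = m ->
  \sum_(v | v \notin F) f (F :|: [set v]) =
  \sum_(H in faces_sz X m.+1 | F \subset H) f H.
Proof.
move=> cF.
have -> : \sum_(v | v \notin F) f (F :|: [set v]) = \sum_(v in ~: F) f (F :|: [set v]).
  by apply: eq_bigl => v; rewrite inE.
rewrite -(big_imset _ (h := fun v => F :|: [set v])); last first.
  move=> u u' uF u'F /= e; apply/eqP; apply: contraT => ne.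
  have : u \in F :|: [set u'] by rewrite -e !inE eqxx orbT.
  by rewrite !inE (negbTE ne) orbF; move: uF; rewrite inE => /negbTE ->.
apply: eq_bigl => H; rewrite /faces_sz inE.
symmetry; apply/idP/imsetP.
  move=> /andP[/andP[HX /eqP cH] sFH].
  have : #|H :\: F| == 1%N by rewrite cardsDS // cH cF subSnn.
  move=> /cards1P [u hu].
  have : u \in H :\: F by rewrite hu set11.
  rewrite inE => /andP[uF uH].
  exists u; first by rewrite inE.
  apply/setP => x; rewrite !inE.
  case: (x =P u) => [->|/eqP xu]; first by rewrite uH orbT.
  rewrite orbF; case: (boolP (x \in F)) => xF /=; first by rewrite (subsetP sFH).
  case: (boolP (x \in H)) => // xH.
  have : x \in H :\: F by rewrite inE xF xH.
  by rewrite hu inE (negbTE xu).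
move=> [u]; rewrite inE => uF ->; rewrite subsetUl andbT.
have c : #|F :|: [set u]| = m.+1 by rewrite setUC cardsU1 uF cF.
by rewrite c eqxx andbT skel // c.
Qed.

Variable b : {set 'I_n} -> R.
Hypothesis hB : in_B X m.+1 b.

Lemma db0 K : #|K| = m.+2 -> \sum_(w in K) inc R K (K :\ w) * b (K :\ w) = 0.
Proof.
move=> cK; have [g hg] := hB.
rewrite (eq_bigr (fun w => \sum_(G in faces_sz X m)
                   inc R K (K :\ w) * (inc R (K :\ w) G * g G))); last first.
  move=> w wK; rewrite hg; last first.
    have c : #|K :\ w| = m.+1 by move: cK; rewrite (cardsD1 w) wK => [[]].
    by rewrite /faces_sz inE c eqxx skel ?c.
  by rewrite /delta subSS subn0 big_distrr.
rewrite exchange_big big1 // => G _.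
rewrite (eq_bigr (fun w => inc R K (K :\ w) * inc R (K :\ w) G * g G)); last first.
  by move=> w _; rewrite mulrA.
by rewrite -big_distrl /= (dd0 K G) mul0r.
Qed.

Lemma partA H : H \in faces_sz X m.+1 ->
  \sum_(F in faces_sz X m | F \subset H) inc R H F * hb b F = n%:R * b H.
Proof.
move=> HX'; move: (HX'); rewrite /faces_sz inE => /andP[HX /eqP cH].
rewrite reidx1 //.
have step1 : forall u, u \in H -> hb b (H :\ u) = inc R H (H :\ u) * b H +
   \sum_(v | v \notin H) inc R ((H :\ u) :|: [set v]) (H :\ u) * b ((H :\ u) :|: [set v]).
  move=> u uH; rewrite /hb (bigD1 u) /=; last by rewrite !inE eqxx.
  have -> : (H :\ u) :|: [set u] = H by rewrite setUC setD1K.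
  congr (_ + _); apply: eq_bigl => v; rewrite !inE.
  by case: eqP => [->|_]; rewrite ?uH //= ?andbT.
have incHu : forall u, u \in H -> inc R H (H :\ u) ^+ 2 = 1.
  by move=> u uH; rewrite -{1}(setD1K uH) setUC inc_add ?sgn_sq // !inE eqxx.
have step2 : forall v, v \notin H -> \sum_(u in H) inc R H (H :\ u) *
    (inc R ((H :\ u) :|: [set v]) (H :\ u) * b ((H :\ u) :|: [set v])) = b H.
  move=> v vH; set K := H :|: [set v].
  have cK : #|K| = m.+2 by rewrite /K setUC cardsU1 vH cH.
  have eKu : forall u, u \in H -> (H :\ u) :|: [set v] = K :\ u.
    move=> u uH; apply/setP => y; rewrite !inE; case: (y =P u) => [->|_] //=.
    by case: (u =P v) => // uv; move: vH; rewrite -uv uH.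
  rewrite (eq_bigr (fun u => - inc R K H * (inc R K (K :\ u) * b (K :\ u)))); last first.
    move=> u uH; rewrite eKu // mulrA.
    have uv : u != v by apply/eqP => uv; move: vH; rewrite -uv uH.
    have e := @inc_swap (H :\ u) u v.
    rewrite !inE eqxx (negbTE vH) andbF /= in e; have {}e := e isT isT uv.
    have eH : (H :\ u) :|: [set u] = H by rewrite setUC setD1K.
    rewrite eH eKu // -/K in e.
    by rewrite -[X in X * _ = _]opprK -e !mulNr mulrA.
  rewrite -big_distrr /=.
  have := db0 K cK; rewrite (bigD1 v) /=; last by rewrite !inE eqxx orbT.
  have -> : K :\ v = H.
    apply/setP => y; rewrite !inE; case: eqP => [->|_] /=; last by rewrite orbF.
    by rewrite (negbTE vH).
  rewrite (eq_bigl (fun w => w \in H)) => [e|w]; last first.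
    by rewrite !inE; case: eqP => [->|_]; rewrite ?(negbTE vH) //= ?orbF ?andbT.
  have -> : \sum_(i in H) inc R K (K :\ i) * b (K :\ i) = - (inc R K H * b H).
    by apply/eqP; rewrite -addr_eq0 addrC e.
  by rewrite mulrN mulNr opprK mulrA -expr2 /K inc_add // sgn_sq mul1r.
rewrite (eq_bigr (fun u => b H + \sum_(v | v \notin H) inc R H (H :\ u) *
    (inc R ((H :\ u) :|: [set v]) (H :\ u) * b ((H :\ u) :|: [set v])))); last first.
  by move=> u uH; rewrite step1 // mulrDr mulrA -expr2 incHu // mul1r big_distrr.
rewrite big_split /= exchange_big /=.
rewrite [X in _ + X](eq_bigr (fun v => b H)); last by move=> v vH; apply: step2.
rewrite [X in _ + X](eq_bigl (fun v => v \in ~: H) (fun v => b H)); last by move=> v; rewrite inE.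
by rewrite !sumr_const -mulrnDr cardsC card_ord mulr_natl.
Qed.

Lemma inc_Hu H u : u \in H -> inc R H (H :\ u) ^+ 2 = 1.
Proof. by move=> uH; rewrite -{1}(setD1K uH) setUC inc_add ?sgn_sq // !inE eqxx. Qed.

Lemma delta_ind F H : F \in faces_sz X m -> delta X m (ind R F) H = inc R H F.
Proof.
move=> FX; rewrite /delta (bigD1 F) //= big1 ?addr0; first by rewrite /ind eqxx mulr1.
by move=> G /andP[_ ne]; rewrite /ind (negbTE ne) mulr0.
Qed.

Lemma sum_sq_sub H (g : {set 'I_n} -> R) : #|H| = m.+1 ->
  \sum_(F in faces_sz X m) g F * inc R H F ^+ 2 =
  \sum_(F in faces_sz X m | F \subset H) g F.
Proof.
move=> cH; rewrite (bigID (fun F => F \subset H)) /= [X in _ + X]big1 ?addr0; last first.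
  by move=> F /andP[_ nsub]; rewrite inc_notsub // expr2 mulr0 mulr0.
rewrite !reidx1 //; apply: eq_bigr => u uH; by rewrite inc_Hu // mulr1.
Qed.

Lemma sum1_sub H : #|H| = m.+1 ->
  \sum_(F in faces_sz X m | F \subset H) (1 : R) = m.+1%:R.
Proof. by move=> cH; rewrite reidx1 // sumr_const cH. Qed.

Lemma partB (hn : n%:R != 0 :> R) (d : R) :
  ip X m.+1 (Eop X d b) (Eop X d b)
        <= m.+1%:R / n%:R ^+ 2 *
           \sum_(F in faces_sz X m)
              hb b F ^+ 2 *
              ip X m.+1 (Eop X d (delta X m (ind R F)))
                     (Eop X d (delta X m (ind R F))).
Proof.
set e := fun H => (deg X H)%:R - d.
set Q := fun H => \sum_(F in faces_sz X m | F \subset H) hb b F ^+ 2.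
have rhs : \sum_(F in faces_sz X m) hb b F ^+ 2 *
              ip X m.+1 (Eop X d (delta X m (ind R F))) (Eop X d (delta X m (ind R F)))
         = \sum_(H in faces_sz X m.+1) e H ^+ 2 * Q H.
  rewrite /ip /Eop.
  rewrite (eq_bigr (fun F => \sum_(H in faces_sz X m.+1) e H ^+ 2 * (hb b F ^+ 2 * inc R H F ^+ 2))); last first.
    move=> F FX; rewrite big_distrr; apply: eq_bigr => H _; rewrite !delta_ind // /e /=; ring.
  rewrite exchange_big; apply: eq_bigr => H; rewrite /faces_sz inE => /andP[_ /eqP cH].
  by rewrite -big_distrr /= sum_sq_sub.
rewrite rhs big_distrr /= /ip /Eop; apply: ler_sum => H HX.
move: (HX); rewrite /faces_sz inE => /andP[_ /eqP cH].
set S := \sum_(F in faces_sz X m | F \subset H) inc R H F * hb b F.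
have hbH : b H = n%:R^-1 * S by rewrite /S partA // mulKf.
have csH : S ^+ 2 <= m.+1%:R * Q H.
  have := @cs R _ (fun F => (F \in faces_sz X m) && (F \subset H)) (fun F => inc R H F * hb b F).
  rewrite -/S sum1_sub //.
  have -> : \sum_(i | (i \in faces_sz X m) && (i \subset H)) (inc R H i * hb b i) ^+ 2 = Q H.
    rewrite /Q !reidx1 //; apply: eq_bigr => u uH; by rewrite exprMn inc_Hu // mul1r.
  by [].
rewrite hbH -/(e H).
have -> : e H * (n%:R^-1 * S) * (e H * (n%:R^-1 * S)) = (e H ^+ 2 / n%:R ^+ 2) * S ^+ 2.
  by rewrite -exprVn; ring.
have -> : m.+1%:R / n%:R ^+ 2 * (e H ^+ 2 * Q H) = (e H ^+ 2 / n%:R ^+ 2) * (m.+1%:R * Q H).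
  by ring.
by apply: ler_wpM2l => //; rewrite divr_ge0 // sqr_ge0.
Qed.

Lemma partC (hmn : (m <= n)%N) :
  \sum_(F in faces_sz X m) hb b F ^+ 2
        <= m.+1%:R * (n%:R - m.+1%:R + 1) * ip X m.+1 b b.
Proof.
have e1 : n%:R - m.+1%:R + 1 = (n - m)%:R :> R.
  by rewrite natrB // -[m.+1]addn1 natrD; ring.
rewrite e1.
apply: (le_trans (y := \sum_(F in faces_sz X m)
           (n - m)%:R * \sum_(v | v \notin F) b (F :|: [set v]) ^+ 2)).
  apply: ler_sum => F; rewrite /faces_sz inE => /andP[_ /eqP cF].
  have := @cs R _ (fun v => v \notin F) (fun v => inc R (F :|: [set v]) F * b (F :|: [set v])).
  have -> : \sum_(v | v \notin F) (1 : R) = (n - m)%:R.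
    rewrite (eq_bigl (fun v => v \in ~: F) (fun v => 1)) => [|v]; last by rewrite inE.
    have hc : #|~: F| = (n - m)%N.
      by apply/eqP; rewrite -(eqn_add2l m) subnKC // -{1}cF cardsC card_ord.
    by rewrite sumr_const hc.
  have -> : \sum_(v | v \notin F) (inc R (F :|: [set v]) F * b (F :|: [set v])) ^+ 2 =
            \sum_(v | v \notin F) b (F :|: [set v]) ^+ 2.
    by apply: eq_bigr => v vF; rewrite exprMn inc_add // sgn_sq mul1r.
  by move=> h; exact: h.
rewrite -big_distrr /= -mulrA mulrCA ler_wpM2l //.
rewrite (eq_bigr (fun F => \sum_(H in faces_sz X m.+1 | F \subset H) b H ^+ 2)); last first.
  move=> F FX; have cF : #|F| = m by move: FX; rewrite /faces_sz inE => /andP[_ /eqP].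
  exact: (reidx2 (fun H => b H ^+ 2) F cF).
under eq_bigr do rewrite big_mkcondr.
rewrite exchange_big /= /ip big_distrr /=.
apply: ler_sum => H HX; rewrite le_eqVlt; apply/orP; left; apply/eqP.
have cH : #|H| = m.+1 by move: HX; rewrite /faces_sz inE => /andP[_ /eqP].
rewrite -big_mkcondr /=.
rewrite (eq_bigr (fun _ => b H ^+ 2 * 1)); last by move=> F _; rewrite mulr1.
rewrite -big_distrr /= sum1_sub //; ring.
Qed.

End Aux.

Theorem lemma3p8 (R : realFieldType) (n k : nat) (X : {set {set 'I_n}})
  (b : {set 'I_n} -> R) (d : R) :
  (1 <= k)%N ->
  is_complex X ->
  (forall F : {set 'I_n}, (#|F| <= k)%N -> F \in X) ->
  (forall F : {set 'I_n}, F \in X -> (#|F| <= k.+1)%N) ->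
  (exists F : {set 'I_n}, F \in X /\ #|F| = k.+1) ->
  in_B X k b ->
  0 < d ->
  [/\ (forall H, H \in faces_sz X k ->
         b H = n%:R^-1 * \sum_(F in faces_sz X (k - 1) | F \subset H)
                           inc R H F * hb b F),
      ip X k (Eop X d b) (Eop X d b)
        <= k%:R / n%:R ^+ 2 *
           \sum_(F in faces_sz X (k - 1))
              hb b F ^+ 2 *
              ip X k (Eop X d (delta X (k - 1) (ind R F)))
                     (Eop X d (delta X (k - 1) (ind R F)))
    & \sum_(F in faces_sz X (k - 1)) hb b F ^+ 2
        <= k%:R * (n%:R - k%:R + 1) * ip X k b b].
Proof.
move=> hk cpx skel' bound [F0 [F0X cF0]] hB hd.
case: k hk skel' bound cF0 hB => // m _ skel' bound cF0 hB.
rewrite subSS subn0.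
have hn : (m.+2 <= n)%N.
  have h : (#|F0| <= #|'I_n|)%N by apply: max_card.
  by rewrite card_ord cF0 in h.
have hn0 : n%:R != 0 :> R by rewrite pnatr_eq0 -lt0n; apply: leq_trans hn.
split.
- by move=> H HX; rewrite (@partA R n X m skel' b hB H HX) mulKf.
- exact: (@partB R n X m skel' b hB hn0).
- apply: (@partC R n X m skel' b); exact: leq_trans (leqnSn _) (ltnW hn).
Qed.
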